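(* Let $I\subset\mathbb{R}$ be an open interval, $\lambda:I\to\mathbb{R}$ a non-constant positive smooth function, and fix a sign $\pm$. For $c\in I$, let $f_c:\mathbb{R}^2\to\tilde M(1-\lambda^2,2(1\pm\lambda))$, $f_c(x,y)=(x,y,c)$, with $\mathbb{R}^2$ carrying the induced metric (so $f_c$ is an anti-invariant isometric immersion with unit normal $e_3$). Then $f_c$ is proper biharmonic if and only if $\lambda'(c)\neq0$ and $$\Big(\lambda\lambda''-2(\lambda')^2-8\lambda^2(1\pm\lambda)^2\Big)\Big|_{z=c}=0,$$ with the sign $\pm$ the same as in $\tilde M(1-\lambda^2,2(1\pm\lambda))$.
   Context: Definition of $\tilde M(1-\lambda^2,2(1\pm\lambda))$: Let $\lambda:I\to\mathbb{R}$ be a non-constant positive smooth function on an open interval $I$, $\lambda'=d\lambda/dz$. On $\tilde M^3=\mathbb{R}^2\times I\subset\mathbb{R}^3$ with coordinates $(x,y,z)$ consider the vector fields $e_1=\partial_x$, $e_2=\partial_y$, $e_3=(\pm 2y+f(z))\partial_x+\big(2\lambda x-\frac{\lambda'}{2\lambda}y+h(z)\big)\partial_y+\partial_z$, where $f,h$ are arbitrary smooth functions of $z$. Let $g$ be the Riemannian metric with $g(e_i,e_j)=\delta_{ij}$, $\xi=e_1$, $\eta$ the $1$-form dual to $e_1$, and $\phi$ the $(1,1)$-tensor with $\phi e_1=0$, $\phi e_2=\pm e_3$, $\phi e_3=\mp e_2$ (all double signs correspond to the sign in $\pm 2y$). This is a contact metric manifold which is a generalized $(\kappa,\mu)$-manifold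 with $\kappa=1-\lambda^2$, $\mu=2(1\pm\lambda)$. A surface is anti-invariant if tangent to $\xi$ and $g(X,\phi Y)=0$ for tangent $X,Y$. An isometric immersion $f$ is biharmonic if $\tau_2(f)=-\Delta_f\tau(f)+\mathrm{trace}\,\tilde R(\tau(f),df)df=0$ ($\tau(f)=2H$, $H$ the mean curvature vector, $\tilde R(X,Y)=[\tilde\nabla_X,\tilde\nabla_Y]-\tilde\nabla_{[X,Y]}$), and proper biharmonic if biharmonic and not minimal. *)

(* Defs.v *)
From Stdlib Require Import Reals ClassicalEpsilon.
Open Scope R_scope.

(* Points / vectors in R^n are represented as functions nat -> R;
   only the components 0 .. n-1 are meaningful. *)
Definition vec := nat -> R.
Definition mat := nat -> nat -> R.

Fixpoint sumn (n : nat) (f : nat -> R) : R :=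
  match n with O => 0 | S m => sumn m f + f m end.

Definition delta (i j : nat) : R := if Nat.eqb i j then 1 else 0.

Definition Deriv (g : R -> R) (x : R) : R :=
  epsilon (inhabits 0) (fun l => derivable_pt_lim g x l).

Definition shift (p : vec) (i : nat) (t : R) : vec :=
  fun k => if Nat.eqb k i then p k + t else p k.

Definition pd (F : vec -> R) (i : nat) (p : vec) : R :=
  Deriv (fun t => F (shift p i t)) 0.

Definition mat_inv (n : nat) (M : mat) : mat :=
  epsilon (inhabits (fun _ _ => 0))
    (fun N : mat => forall i j, (i < n)%nat -> (j < n)%nat ->
        sumn n (fun k => M i k * N k j) = delta i j).

Definition metric := vec -> mat.

Definition christoffel (n : nat) (G : metric) (k i j : nat) (p : vec) : R :=
  / 2 * sumn n (fun l => mat_inv n (G p) k l *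
     (pd (fun q => G q j l) i p + pd (fun q => G q i l) j p
      - pd (fun q => G q i j) l p)).

(* Riemann curvature R(X,Y)Z = [nabla_X, nabla_Y] Z - nabla_[X,Y] Z at p *)
Definition curv (n : nat) (G : metric) (X Y Z : vec) (p : vec) : vec :=
  fun l => sumn n (fun i => sumn n (fun j => sumn n (fun k =>
    X i * Y j * Z k *
    (pd (christoffel n G l j k) i p - pd (christoffel n G l i k) j p
     + sumn n (fun m => christoffel n G l i m p * christoffel n G m j k p
                        - christoffel n G l j m p * christoffel n G m i k p))))).

Definition dphi (phi : vec -> vec) (a : nat) (u : vec) : vec :=
  fun k => pd (fun v => phi v k) a u.

Definition pullback_metric (n : nat) (G : metric) (phi : vec -> vec) : metric :=
  fun u a b => sumn n (fun i => sumn n (fun j =>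
     dphi phi a u i * G (phi u) i j * dphi phi b u j)).

Definition pull_conn (n : nat) (G : metric) (phi : vec -> vec) (a : nat)
  (V : vec -> vec) (u : vec) : vec :=
  fun k => pd (fun v => V v k) a u
    + sumn n (fun i => sumn n (fun j =>
        christoffel n G k i j (phi u) * dphi phi a u i * V u j)).

Definition tension (m n : nat) (h G : metric) (phi : vec -> vec) (u : vec) : vec :=
  fun k => sumn m (fun a => sumn m (fun b => mat_inv m (h u) a b *
     (pull_conn n G phi a (dphi phi b) u k
      - sumn m (fun c => christoffel m h c a b u * dphi phi c u k)))).

(* rough Laplacian Delta_phi V = - trace (nabla^phi nabla^phi - nabla^phi_nabla) V *)
Definition rough_lap (m n : nat) (h G : metric) (phi : vec -> vec)
  (V : vec -> vec) (u : vec) : vec :=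
  fun k => - sumn m (fun a => sumn m (fun b => mat_inv m (h u) a b *
     (pull_conn n G phi a (pull_conn n G phi b V) u k
      - sumn m (fun c => christoffel m h c a b u * pull_conn n G phi c V u k)))).

Definition bitension (m n : nat) (h G : metric) (phi : vec -> vec) (u : vec) : vec :=
  fun k => - rough_lap m n h G phi (tension m n h G phi) u k
    + sumn m (fun a => sumn m (fun b => mat_inv m (h u) a b *
        curv n G (tension m n h G phi u) (dphi phi a u) (dphi phi b u) (phi u) k)).

(* For an isometric immersion phi : R^m -> (R^n-open set, G), the domain
   carries the induced metric. *)
Definition biharmonic_imm (m n : nat) (G : metric) (phi : vec -> vec) : Prop :=
  forall u k, (k < n)%nat ->
    bitension m n (pullback_metric n G phi) G phi u k = 0.

Definition minimal_imm (m n : nat) (G : metric) (phi : vec -> vec) : Prop :=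
  forall u k, (k < n)%nat ->
    tension m n (pullback_metric n G phi) G phi u k = 0.

Definition proper_biharmonic_imm (m n : nat) (G : metric) (phi : vec -> vec) : Prop :=
  biharmonic_imm m n G phi /\ ~ minimal_imm m n G phi.

Definition is_open_interval (I : R -> Prop) : Prop :=
  (exists x, I x) /\
  (forall x y z, I x -> I z -> x <= y <= z -> I y) /\
  (forall x, I x -> exists e, 0 < e /\ forall y, Rabs (y - x) < e -> I y).

Definition smooth_on (I : R -> Prop) (g : R -> R) : Prop :=
  exists D : nat -> R -> R,
    (forall x, I x -> D O x = g x) /\
    (forall n x, I x -> derivable_pt_lim (D n) x (D (S n) x)).

Definition sgn (eps : bool) : R := if eps then 1 else -1.

(* orthonormal frame e_1, e_2, e_3 (indices 0,1,2) at p = (x,y,z) *)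
Definition frameM (lam f h : R -> R) (eps : bool) (a : nat) (p : vec) : vec :=
  match a with
  | O => fun k => match k with O => 1 | _ => 0 end
  | 1%nat => fun k => match k with 1%nat => 1 | _ => 0 end
  | _ => fun k => match k with
         | O => sgn eps * 2 * p 1%nat + f (p 2%nat)
         | 1%nat => 2 * lam (p 2%nat) * p O
                    - Deriv lam (p 2%nat) / (2 * lam (p 2%nat)) * p 1%nat
                    + h (p 2%nat)
         | _ => 1
         end
  end.

Definition metric_of_frame (e : nat -> vec -> vec) : metric :=
  fun p => epsilon (inhabits (fun _ _ => 0))
    (fun Gp : mat => forall a b, (a < 3)%nat -> (b < 3)%nat ->
       sumn 3 (fun i => sumn 3 (fun j => e a p i * Gp i j * e b p j)) = delta a b).

Definition gM (lam f h : R -> R) (eps : bool) : metric :=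
  metric_of_frame (frameM lam f h eps).

Definition f_c (c : R) : vec -> vec :=
  fun u k => match k with O => u O | 1%nat => u 1%nat | _ => c end.

(* Main.v *)
Require Import Defs.
From Stdlib Require Import Reals Lra Lia ClassicalEpsilon FunctionalExtensionality.
From Coquelicot Require Import Coquelicot.
Open Scope R_scope.


Module P1.

Lemma Deriv_eq g x l : derivable_pt_lim g x l -> Deriv g x = l.
Proof.
  intro H. unfold Deriv.
  pose proof (epsilon_spec (inhabits 0) (fun l => derivable_pt_lim g x l) (ex_intro _ l H)) as H2.
  exact (uniqueness_limite _ _ _ _ H2 H).
Qed.

Lemma pd_lim F i p l : is_derive (fun t => F (shift p i t)) 0 l -> pd F i p = l.
Proof. intro H. unfold pd. apply Deriv_eq. apply is_derive_Reals. exact H. Qed.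

Lemma pd_ext F F' i p : (forall t, F (shift p i t) = F' (shift p i t)) -> pd F i p = pd F' i p.
Proof. intro H. unfold pd. f_equal. apply functional_extensionality. exact H. Qed.

Lemma pd_const F i p a : (forall t, F (shift p i t) = a) -> pd F i p = 0.
Proof. intro H. rewrite (pd_ext F (fun _ => a)) by exact H. apply pd_lim. auto_derive; auto. Qed.

Lemma Derive_eta g x l : derivable_pt_lim g x l -> Derive (fun y => g y) x = l.
Proof. intro H. apply is_derive_unique. apply is_derive_Reals. exact H. Qed.

Lemma sumn_ext n f g : (forall k, (k < n)%nat -> f k = g k) -> sumn n f = sumn n g.
Proof. induction n; intros H; simpl; auto. rewrite IHn by (intros; apply H; lia). rewrite H by lia. auto. Qed.
Lemma sumn_scal_l n a f : sumn n (fun k => a * f k) = a * sumn n f.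
Proof. induction n; simpl; [ring| rewrite IHn; ring]. Qed.
Lemma sumn_scal_r n a f : sumn n (fun k => f k * a) = sumn n f * a.
Proof. induction n; simpl; [ring| rewrite IHn; ring]. Qed.
Lemma sumn_plus n f g : sumn n (fun k => f k + g k) = sumn n f + sumn n g.
Proof. induction n; simpl; [ring| rewrite IHn; ring]. Qed.
Lemma sumn_zero n : sumn n (fun _ => 0) = 0.
Proof. induction n; simpl; [ring| rewrite IHn; ring]. Qed.
Lemma sumn_swap n m F : sumn n (fun i => sumn m (fun j => F i j)) = sumn m (fun j => sumn n (fun i => F i j)).
Proof.
  induction n; simpl. { symmetry. apply sumn_zero. }
  rewrite IHn. rewrite <- sumn_plus. reflexivity.
Qed.
Lemma sumn_delta_l n i g : (i < n)%nat -> sumn n (fun k => delta i k * g k) = g i.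
Proof.
  induction n; intros Hi; simpl. lia.
  destruct (Nat.eq_dec i n).
  - subst. rewrite (sumn_ext _ _ (fun _ => 0)). rewrite sumn_zero. unfold delta. rewrite Nat.eqb_refl. ring.
    intros k Hk. unfold delta. destruct (Nat.eqb_spec n k). lia. ring.
  - rewrite IHn by lia. unfold delta. destruct (Nat.eqb_spec i n). lia. ring.
Qed.
Lemma sumn_delta_r n i g : (i < n)%nat -> sumn n (fun k => g k * delta k i) = g i.
Proof.
  intro Hi. rewrite <- (sumn_delta_l n i g Hi). apply sumn_ext. intros k _. unfold delta.
  destruct (Nat.eqb_spec k i), (Nat.eqb_spec i k); subst; try lia; ring.
Qed.

Lemma mat_inv_unique n M L :
  (forall i j, (i < n)%nat -> (j < n)%nat -> sumn n (fun k => L i k * M k j) = delta i j) ->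
  (forall i j, (i < n)%nat -> (j < n)%nat -> sumn n (fun k => M i k * L k j) = delta i j) ->
  forall i j, (i < n)%nat -> (j < n)%nat -> mat_inv n M i j = L i j.
Proof.
  intros HL HR.
  pose proof (epsilon_spec (inhabits (fun _ _ => 0))
    (fun N : mat => forall i j, (i < n)%nat -> (j < n)%nat ->
        sumn n (fun k => M i k * N k j) = delta i j) (ex_intro _ L HR)) as HN.
  fold (mat_inv n M) in HN. set (N := mat_inv n M) in *.
  intros i j Hi Hj.
  rewrite <- (sumn_delta_r n j (fun k => L i k) Hj).
  rewrite (sumn_ext _ _ (fun k => sumn n (fun l => L i k * (M k l * N l j)))).
  2:{ intros k Hk. rewrite <- HN by auto. rewrite sumn_scal_l. reflexivity. }
  rewrite sumn_swap.
  rewrite (sumn_ext _ _ (fun l => sumn n (fun k => L i k * M k l) * N l j)).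
  2:{ intros l Hl. rewrite <- sumn_scal_r. apply sumn_ext. intros; ring. }
  rewrite (sumn_ext _ _ (fun l => delta i l * N l j)).
  2:{ intros l Hl. rewrite HL by auto. reflexivity. }
  symmetry. apply (sumn_delta_l n i (fun l => N l j)). auto.
Qed.

End P1.
Import P1.


Module P2.

Section S.
Variables (lam f h : R -> R) (eps : bool) (c f1 l1 l2 h1 : R).

Definition Ap (p : vec) := sgn eps * 2 * p 1%nat + f (p 2%nat).
Definition Bp (p : vec) := 2 * lam (p 2%nat) * p O
                    - Deriv lam (p 2%nat) / (2 * lam (p 2%nat)) * p 1%nat + h (p 2%nat).

Definition Gm (p : vec) (i j : nat) : R :=
  match i, j with
  | 0%nat, 0%nat => 1 | 0%nat, 1%nat => 0 | 0%nat, 2%nat => - Ap p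
  | 1%nat, 0%nat => 0 | 1%nat, 1%nat => 1 | 1%nat, 2%nat => - Bp p
  | 2%nat, 0%nat => - Ap p | 2%nat, 1%nat => - Bp p | 2%nat, 2%nat => 1 + Ap p ^ 2 + Bp p ^ 2
  | _, _ => 0 end.

Definition Gi (p : vec) (i j : nat) : R :=
  match i, j with
  | 0%nat, 0%nat => 1 + Ap p ^ 2 | 0%nat, 1%nat => Ap p * Bp p | 0%nat, 2%nat => Ap p
  | 1%nat, 0%nat => Ap p * Bp p | 1%nat, 1%nat => 1 + Bp p ^ 2 | 1%nat, 2%nat => Bp p
  | 2%nat, 0%nat => Ap p | 2%nat, 1%nat => Bp p | 2%nat, 2%nat => 1
  | _, _ => 0 end.

Ltac destr3 i := destruct i as [|[|[|i]]]; [| | | exfalso; lia].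

Lemma gM_val p i j : (i < 3)%nat -> (j < 3)%nat -> gM lam f h eps p i j = Gm p i j.
Proof.
  unfold gM, metric_of_frame.
  set (P := fun Gp : mat => forall a b, (a < 3)%nat -> (b < 3)%nat ->
       sumn 3 (fun i => sumn 3 (fun j => frameM lam f h eps a p i * Gp i j * frameM lam f h eps b p j)) = delta a b).
  assert (HG : P (Gm p)).
  { intros a b Ha Hb. destr3 a; destr3 b; cbn; unfold Ap, Bp; ring. }
  pose proof (epsilon_spec (inhabits (fun _ _ => 0)) P (ex_intro _ _ HG)) as HQ.
  set (Q := epsilon (inhabits (fun _ _ => 0)) P) in *.
  assert (E := fun a b Ha Hb => HQ a b Ha Hb).
  pose proof (E 0%nat 0%nat ltac:(lia) ltac:(lia)) as e00.
  pose proof (E 0%nat 1%nat ltac:(lia) ltac:(lia)) as e01.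
  pose proof (E 0%nat 2%nat ltac:(lia) ltac:(lia)) as e02.
  pose proof (E 1%nat 0%nat ltac:(lia) ltac:(lia)) as e10.
  pose proof (E 1%nat 1%nat ltac:(lia) ltac:(lia)) as e11.
  pose proof (E 1%nat 2%nat ltac:(lia) ltac:(lia)) as e12.
  pose proof (E 2%nat 0%nat ltac:(lia) ltac:(lia)) as e20.
  pose proof (E 2%nat 1%nat ltac:(lia) ltac:(lia)) as e21.
  pose proof (E 2%nat 2%nat ltac:(lia) ltac:(lia)) as e22.
  clear E HQ HG. cbn in e00, e01, e02, e10, e11, e12, e20, e21, e22.
  fold (Ap p) in *. fold (Bp p) in *.
  set (A := Ap p) in *. set (B := Bp p) in *.
  assert (q00 : Q 0%nat 0%nat = 1) by lra.
  assert (q01 : Q 0%nat 1%nat = 0) by lra.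
  assert (q10 : Q 1%nat 0%nat = 0) by lra.
  assert (q11 : Q 1%nat 1%nat = 1) by lra.
  rewrite q00, q01 in e02. rewrite q10, q11 in e12.
  rewrite q00, q10 in e20. rewrite q01, q11 in e21.
  assert (q02 : Q 0%nat 2%nat = - A) by lra.
  assert (q12 : Q 1%nat 2%nat = - B) by lra.
  assert (q20 : Q 2%nat 0%nat = - A) by lra.
  assert (q21 : Q 2%nat 1%nat = - B) by lra.
  rewrite q00, q01, q02, q10, q11, q12, q20, q21 in e22.
  assert (q22 : Q 2%nat 2%nat = 1 + A^2 + B^2) by nra.
  intros Hi Hj. destr3 i; destr3 j; cbn; fold A B; auto.
Qed.
End S.

End P2.
Import P2.


Module P3.

Ltac destr3 i := destruct i as [|[|[|i]]]; [| | | exfalso; lia].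

Section S.
Variables (lam f h : R -> R) (eps : bool) (c f1 l1 l2 h1 : R).
Notation G := (gM lam f h eps).
Notation Ap := (Ap f eps).
Notation Bp := (Bp lam h).
Notation Gm := (Gm lam f h eps).
Notation Gi := (Gi lam f h eps).

Lemma Ginv_val p k l : (k < 3)%nat -> (l < 3)%nat -> mat_inv 3 (G p) k l = Gi p k l.
Proof.
  apply mat_inv_unique; intros i j Hi Hj.
  - rewrite (sumn_ext _ _ (fun k => Gi p i k * Gm p k j)) by (intros; rewrite gM_val; auto).
    destr3 i; destr3 j; cbn; unfold delta; simpl; ring.
  - rewrite (sumn_ext _ _ (fun k => Gm p i k * Gi p k j)) by (intros; rewrite gM_val; auto).
    destr3 i; destr3 j; cbn; unfold delta; simpl; ring.
Qed.

Lemma dphi_val u a i : (a < 2)%nat -> dphi (f_c c) a u i = delta a i.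
Proof.
  intro Ha. unfold dphi. apply pd_lim.
  destruct a as [|[|a]]; [| | lia]; destruct i as [|[|i]]; cbn; unfold delta; simpl;
  auto_derive; auto; ring.
Qed.

Lemma pb_val u a b : (a < 2)%nat -> (b < 2)%nat -> pullback_metric 3 G (f_c c) u a b = delta a b.
Proof.
  intros Ha Hb. unfold pullback_metric.
  rewrite (sumn_ext _ _ (fun i => sumn 3 (fun j => delta a i * Gm (f_c c u) i j * delta b j))).
  2:{ intros i Hi. apply sumn_ext. intros j Hj. rewrite !dphi_val, gM_val; auto. }
  destruct a as [|[|a]]; try lia; destruct b as [|[|b]]; try lia; cbn; unfold delta; simpl; ring.
Qed.

Lemma pbinv_val u a b : (a < 2)%nat -> (b < 2)%nat ->
  mat_inv 2 (pullback_metric 3 G (f_c c) u) a b = delta a b.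
Proof.
  apply mat_inv_unique; intros i j Hi Hj.
  - rewrite (sumn_ext _ _ (fun k => delta i k * delta k j)).
    apply (sumn_delta_l 2 i (fun k => delta k j)); auto.
    intros k Hk. rewrite pb_val by auto. reflexivity.
  - rewrite (sumn_ext _ _ (fun k => delta i k * delta k j)).
    apply (sumn_delta_l 2 i (fun k => delta k j)); auto.
    intros k Hk. rewrite pb_val by auto. reflexivity.
Qed.

Lemma pbchr_val k a b u : (k < 2)%nat -> (a < 2)%nat -> (b < 2)%nat ->
  christoffel 2 (pullback_metric 3 G (f_c c)) k a b u = 0.
Proof.
  intros. unfold christoffel.
  rewrite (sumn_ext _ _ (fun _ => 0)). rewrite sumn_zero; ring.
  intros l Hl.
  rewrite (pd_const _ _ _ (delta b l)) by (intros; apply pb_val; auto).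
  rewrite (pd_const _ _ _ (delta a l)) by (intros; apply pb_val; auto).
  rewrite (pd_const _ _ _ (delta a b)) by (intros; apply pb_val; auto).
  ring.
Qed.
End S.

End P3.
Import P3.


Module P4.

Ltac destr3 i := destruct i as [|[|[|i]]]; [| | | exfalso; lia].

Section S.
Variables (lam f h : R -> R) (eps : bool) (c f1 l1 l2 h1 : R).
Notation G := (gM lam f h eps).
Notation Ap := (Ap f eps).
Notation Bp := (Bp lam h).
Notation Gm := (Gm lam f h eps).
Notation Gi := (Gi lam f h eps).

Definition mu (z : R) := Deriv lam z / (2 * lam z).
Definition mu1 := (l2 * lam c - l1 * l1) / (2 * lam c ^ 2).
Definition Ad (l : nat) (p : vec) : R :=
  match l with O => 0 | 1%nat => sgn eps * 2 | _ => f1 end.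
Definition Bd (l : nat) (p : vec) : R :=
  match l with O => 2 * lam (p 2%nat) | 1%nat => - mu (p 2%nat)
  | _ => 2 * l1 * p O - mu1 * p 1%nat + h1 end.
Definition Bdd (a l : nat) : R :=
  match a, l with
  | 0%nat, 2%nat => 2 * l1 | 2%nat, 0%nat => 2 * l1
  | 1%nat, 2%nat => - mu1 | 2%nat, 1%nat => - mu1 | _, _ => 0 end.
Definition dG (l i j : nat) (p : vec) : R :=
  match i, j with
  | 0%nat, 2%nat => - Ad l p | 2%nat, 0%nat => - Ad l p
  | 1%nat, 2%nat => - Bd l p | 2%nat, 1%nat => - Bd l p
  | 2%nat, 2%nat => 2 * Ap p * Ad l p + 2 * Bp p * Bd l p
  | _, _ => 0 end.

Hypothesis Hf : derivable_pt_lim f c f1.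
Hypothesis Hl : derivable_pt_lim lam c l1.
Hypothesis Hl2 : derivable_pt_lim (Deriv lam) c l2.
Hypothesis Hh : derivable_pt_lim h c h1.
Hypothesis Hlc : lam c <> 0.

Lemma Dl : Deriv lam c = l1.
Proof. apply Deriv_eq; auto. Qed.

Ltac side := repeat split; rewrite ?Rplus_0_r;
  try (eexists; apply is_derive_Reals; eassumption);
  try (intro; apply Hlc; lra); auto.

Ltac fin := rewrite ?Rplus_0_r;
  rewrite ?(Derive_eta _ _ _ Hf), ?(Derive_eta _ _ _ Hl), ?(Derive_eta _ _ _ Hl2), ?(Derive_eta _ _ _ Hh), ?Dl;
  unfold mu1; field; auto.

Lemma pd_G l i j p : (l < 3)%nat -> (i < 3)%nat -> (j < 3)%nat ->
  ((l < 2)%nat \/ p 2%nat = c \/ ((i < 2)%nat /\ (j < 2)%nat)) ->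
  pd (fun q => G q i j) l p = dG l i j p.
Proof.
  intros Hl3 Hi Hj H.
  rewrite (pd_ext _ (fun q => Gm q i j)) by (intros; apply gM_val; auto).
  apply pd_lim.
  destr3 l; destr3 i; destr3 j; unfold Gm, dG, Ad, Bd, mu, Ap, Bp, shift; cbn;
  try (assert (Hp : p 2%nat = c) by (destruct H as [?|[?|[? ?]]]; [lia|auto|lia]); rewrite Hp);
  try (generalize (Deriv lam (p 2%nat) / (2 * lam (p 2%nat))); intro);
  auto_derive; side; fin.
Qed.
End S.

End P4.
Import P4.


Module P5.

Ltac destr3 i := destruct i as [|[|[|i]]]; [| | | exfalso; lia].

Section S.
Variables (lam f h : R -> R) (eps : bool) (c f1 l1 l2 h1 : R).
Notation G := (gM lam f h eps).
Notation Ap := (Ap f eps).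
Notation Bp := (Bp lam h).
Notation Gm := (Gm lam f h eps).
Notation Gi := (Gi lam f h eps).
Notation Ad := (Ad eps f1).
Notation Bd := (Bd lam c l1 l2 h1).
Notation Bdd := (Bdd lam c l1 l2).
Notation dG := (dG lam f h eps c f1 l1 l2 h1).

Definition Chr (k i j : nat) (p : vec) : R :=
  / 2 * sumn 3 (fun l => Gi p k l * (dG i j l p + dG j i l p - dG l i j p)).

Definition dGi (a : nat) (p : vec) (k l : nat) : R :=
  match k, l with
  | 0%nat, 0%nat => 2 * Ap p * Ad a p
  | 0%nat, 1%nat => Ad a p * Bp p + Ap p * Bd a p
  | 1%nat, 0%nat => Ad a p * Bp p + Ap p * Bd a p
  | 0%nat, 2%nat => Ad a p | 2%nat, 0%nat => Ad a p
  | 1%nat, 1%nat => 2 * Bp p * Bd a p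
  | 1%nat, 2%nat => Bd a p | 2%nat, 1%nat => Bd a p
  | _, _ => 0 end.

Definition ddG (a l i j : nat) (p : vec) : R :=
  match i, j with
  | 1%nat, 2%nat => - Bdd a l | 2%nat, 1%nat => - Bdd a l
  | 2%nat, 2%nat => 2 * (Ad a p * Ad l p) + 2 * (Bd a p * Bd l p + Bp p * Bdd a l)
  | _, _ => 0 end.

Definition dChr (a k i j : nat) (p : vec) : R :=
  / 2 * sumn 3 (fun l => dGi a p k l * (dG i j l p + dG j i l p - dG l i j p)
                        + Gi p k l * (ddG a i j l p + ddG a j i l p - ddG a l i j p)).

Hypothesis Hf : derivable_pt_lim f c f1.
Hypothesis Hl : derivable_pt_lim lam c l1.
Hypothesis Hl2 : derivable_pt_lim (Deriv lam) c l2.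
Hypothesis Hh : derivable_pt_lim h c h1.
Hypothesis Hlc : lam c <> 0.

Lemma christoffel_val k i j p : (k < 3)%nat -> (i < 3)%nat -> (j < 3)%nat ->
  (p 2%nat = c \/ ((i < 2)%nat /\ (j < 2)%nat)) ->
  christoffel 3 G k i j p = Chr k i j p.
Proof.
  intros Hk Hi Hj H. unfold christoffel, Chr. f_equal. apply sumn_ext. intros l Hl3.
  rewrite Ginv_val by auto.
  rewrite !(pd_G lam f h eps c f1 l1 l2 h1 Hf Hl Hl2 Hh Hlc) by (auto; destruct H as [?|[? ?]]; auto).
  reflexivity.
Qed.

Ltac side := repeat split; rewrite ?Rplus_0_r;
  try (eexists; apply is_derive_Reals; eassumption);
  try (intro; apply Hlc; lra); auto.

Ltac fin := rewrite ?Rplus_0_r;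
  rewrite ?(Derive_eta _ _ _ Hf), ?(Derive_eta _ _ _ Hl), ?(Derive_eta _ _ _ Hl2), ?(Derive_eta _ _ _ Hh), ?(Dl lam c l1 Hl);
  unfold mu1; field; auto.

Lemma isd_Chr a k i j p : (a < 3)%nat -> (k < 3)%nat -> (i < 3)%nat -> (j < 3)%nat ->
  p 2%nat = c -> ((a < 2)%nat \/ ((i < 2)%nat /\ (j < 2)%nat)) ->
  is_derive (fun t => Chr k i j (shift p a t)) 0 (dChr a k i j p).
Proof.
  intros Ha Hk Hi Hj Hp H.
  unfold Chr, dChr, dGi, ddG, Gi, dG, Ad, Bd, Bdd, mu, Ap, Bp, shift.
  destr3 a; [ | | destruct H as [H|[H1 H2]]; [lia|] ];
  destr3 k; destr3 i; try lia; destr3 j; try lia; cbn; rewrite Hp;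
  [ try (generalize (Deriv lam c / (2 * lam c)); intro) .. | | | | | | | | | | | |];
  auto_derive; side; fin.
Qed.

Lemma pd_Chr a k i j p : (a < 3)%nat -> (k < 3)%nat -> (i < 3)%nat -> (j < 3)%nat ->
  p 2%nat = c -> ((a < 2)%nat \/ ((i < 2)%nat /\ (j < 2)%nat)) ->
  pd (Chr k i j) a p = dChr a k i j p.
Proof. intros. apply pd_lim. apply isd_Chr; auto. Qed.
End S.

End P5.
Import P5.


Module P6.

Ltac destr3 i := destruct i as [|[|[|i]]]; [| | | exfalso; lia].

Section S.
Variables (lam f h : R -> R) (eps : bool) (c f1 l1 l2 h1 : R).
Hypothesis Hf : derivable_pt_lim f c f1.
Hypothesis Hl : derivable_pt_lim lam c l1.
Hypothesis Hl2 : derivable_pt_lim (Deriv lam) c l2.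
Hypothesis Hh : derivable_pt_lim h c h1.
Hypothesis Hlc : lam c <> 0.

Notation G := (gM lam f h eps).
Notation Chr := (Chr lam f h eps c f1 l1 l2 h1).
Notation dChr := (dChr lam f h eps c f1 l1 l2 h1).
Notation T := (tension 2 3 (pullback_metric 3 G (f_c c)) G (f_c c)).
Let cv := christoffel_val lam f h eps c f1 l1 l2 h1 Hf Hl Hl2 Hh Hlc.
Let icv := isd_Chr lam f h eps c f1 l1 l2 h1 Hf Hl Hl2 Hh Hlc.
Let pcv := pd_Chr lam f h eps c f1 l1 l2 h1 Hf Hl Hl2 Hh Hlc.
Let dv := dphi_val c.
Let pbi := pbinv_val lam f h eps c.
Let pbc := pbchr_val lam f h eps c.

Definition tauf (u : vec) (k : nat) := Chr k 0%nat 0%nat (f_c c u) + Chr k 1%nat 1%nat (f_c c u).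

Lemma pd_dphi b k a u : (b < 2)%nat -> pd (fun v => dphi (f_c c) b v k) a u = 0.
Proof. intro. apply (pd_const _ _ _ (delta b k)). intros. apply dv. auto. Qed.

Lemma tension_val u k : (k < 3)%nat -> T u k = tauf u k.
Proof.
  intros Hk. unfold tension. cbn [sumn]. rewrite !pbi by lia. rewrite !pbc by lia.
  unfold pull_conn. rewrite !pd_dphi by lia. cbn [sumn]. rewrite !dv by lia.
  rewrite !cv by (try lia; left; reflexivity). unfold tauf, delta; simpl. ring.
Qed.

Lemma f_c_shift a v t : (a < 2)%nat -> f_c c (shift v a t) = shift (f_c c v) a t.
Proof.
  intro Ha. apply functional_extensionality. intro k.
  destruct a as [|[|a]]; try lia; destruct k as [|[|k]]; unfold shift, f_c; cbn; auto.
Qed.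

Lemma pd_tau a v k : (a < 2)%nat -> (k < 3)%nat ->
  pd (fun w => tauf w k) a v = dChr a k 0%nat 0%nat (f_c c v) + dChr a k 1%nat 1%nat (f_c c v).
Proof.
  intros Ha Hk. apply pd_lim. unfold tauf.
  apply (is_derive_ext (fun t => Chr k 0%nat 0%nat (shift (f_c c v) a t) + Chr k 1%nat 1%nat (shift (f_c c v) a t))).
  { intro t. rewrite f_c_shift; auto. }
  apply is_derive_Reals. apply (derivable_pt_lim_plus (fun t => Chr k 0%nat 0%nat (shift (f_c c v) a t))); apply is_derive_Reals; apply icv; auto; lia.
Qed.

Definition PP := lam c + sgn eps.
Definition PC (a k : nat) : R :=
  match a, k with
  | 0%nat, 1%nat => mu lam c * PP | 1%nat, 0%nat => mu lam c * PP
  | 1%nat, 1%nat => - (mu lam c) ^ 2 | _, _ => 0 end.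

Ltac expl := unfold PC, PP, P5.Chr, P5.dChr, dGi, ddG, P2.Gi, P4.dG, Ad, Bd, Bdd, mu, mu1, P2.Ap, P2.Bp, f_c; cbn;
  rewrite (Dl lam c l1 Hl).

Lemma pc_val a v k : (a < 2)%nat -> (k < 3)%nat -> pull_conn 3 G (f_c c) a T v k = PC a k.
Proof.
  intros Ha Hk. unfold pull_conn.
  rewrite (pd_ext _ (fun w => tauf w k)) by (intros; apply tension_val; auto).
  rewrite pd_tau by auto. cbn [sumn]. rewrite !tension_val by lia. rewrite !dv by lia.
  rewrite !cv by (try lia; left; reflexivity). unfold tauf, delta; simpl.
  destruct a as [|[|a]]; try lia; destr3 k; expl; destruct eps; cbn [sgn]; field; auto.
Qed.
End S.

End P6.
Import P6.


Module P7.

Ltac destr3 i := destruct i as [|[|[|i]]]; [| | | exfalso; lia].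

Section S.
Variables (lam f h : R -> R) (eps : bool) (c f1 l1 l2 h1 : R).
Hypothesis Hf : derivable_pt_lim f c f1.
Hypothesis Hl : derivable_pt_lim lam c l1.
Hypothesis Hl2 : derivable_pt_lim (Deriv lam) c l2.
Hypothesis Hh : derivable_pt_lim h c h1.
Hypothesis Hlc : lam c <> 0.

Notation G := (gM lam f h eps).
Notation Chr := (Chr lam f h eps c f1 l1 l2 h1).
Notation dChr := (dChr lam f h eps c f1 l1 l2 h1).
Notation T := (tension 2 3 (pullback_metric 3 G (f_c c)) G (f_c c)).
Notation PC := (PC lam eps c).
Notation PP := (PP lam eps c).
Let cv := christoffel_val lam f h eps c f1 l1 l2 h1 Hf Hl Hl2 Hh Hlc.
Let pcv := pd_Chr lam f h eps c f1 l1 l2 h1 Hf Hl Hl2 Hh Hlc.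
Let dv := dphi_val c.
Let pbi := pbinv_val lam f h eps c.
Let pbc := pbchr_val lam f h eps c.
Let tv := tension_val lam f h eps c f1 l1 l2 h1 Hf Hl Hl2 Hh Hlc.
Let pv := pc_val lam f h eps c f1 l1 l2 h1 Hf Hl Hl2 Hh Hlc.

Ltac expl := unfold P6.PC, P6.PP, P5.Chr, P5.dChr, dGi, ddG, P2.Gi, P4.dG, Ad, Bd, Bdd, mu, mu1, P2.Ap, P2.Bp, f_c; cbn;
  rewrite (Dl lam c l1 Hl).

Lemma pc2_val a b u k : (a < 2)%nat -> (b < 2)%nat -> (k < 3)%nat ->
  pull_conn 3 G (f_c c) a (pull_conn 3 G (f_c c) b T) u k
  = sumn 3 (fun j => Chr k a j (f_c c u) * PC b j).
Proof.
  intros Ha Hb Hk. unfold pull_conn at 1.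
  rewrite (pd_const _ _ _ (PC b k)) by (intros; apply pv; auto).
  cbn [sumn]. rewrite !pv by lia. rewrite !dv by lia.
  rewrite !cv by (try lia; left; reflexivity).
  destruct a as [|[|a]]; try lia; unfold delta; cbn; ring.
Qed.

Lemma rl_val u k : (k < 3)%nat ->
  rough_lap 2 3 (pullback_metric 3 G (f_c c)) G (f_c c) T u k
  = mu lam c * (2 * PP ^ 2 + mu lam c ^ 2) * Gi lam f h eps (f_c c u) k 2%nat.
Proof.
  intros Hk. unfold rough_lap. cbn [sumn]. rewrite !pbi by lia. rewrite !pbc by lia.
  rewrite !pc2_val by lia. unfold delta; cbn [Nat.eqb].
  destr3 k; expl; destruct eps; cbn [sgn]; field; auto.
Qed.

Lemma dphi_fun a u : (a < 2)%nat -> dphi (f_c c) a u = fun k => delta a k.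
Proof. intro. apply functional_extensionality. intro. apply dv. auto. Qed.

Definition CV (X : vec) (a : nat) (p : vec) (l : nat) : R :=
  sumn 3 (fun i => X i * (pd (christoffel 3 G l a a) i p - pd (christoffel 3 G l i a) a p
    + sumn 3 (fun m => christoffel 3 G l i m p * christoffel 3 G m a a p
                      - christoffel 3 G l a m p * christoffel 3 G m i a p))).

Lemma curv_delta X a p l : (a < 2)%nat ->
  curv 3 G X (fun k => delta a k) (fun k => delta a k) p l = CV X a p l.
Proof.
  intro Ha. unfold curv, CV. destruct a as [|[|a]]; try lia; unfold delta; cbn; ring.
Qed.

Lemma pd_chr_0 l i j p : p 2%nat = c -> (l < 3)%nat -> (i < 3)%nat -> (j < 3)%nat ->
  pd (christoffel 3 G l i j) 0%nat p = dChr 0%nat l i j p.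
Proof.
  intros Hp Hl3 Hi Hj. rewrite (pd_ext _ (Chr l i j)).
  - apply pcv; auto.
  - intro t. apply cv; try lia. left. unfold shift. cbn. auto.
Qed.
Lemma pd_chr_1 l i j p : p 2%nat = c -> (l < 3)%nat -> (i < 3)%nat -> (j < 3)%nat ->
  pd (christoffel 3 G l i j) 1%nat p = dChr 1%nat l i j p.
Proof.
  intros Hp Hl3 Hi Hj. rewrite (pd_ext _ (Chr l i j)).
  - apply pcv; auto.
  - intro t. apply cv; try lia. left. unfold shift. cbn. auto.
Qed.
Lemma pd_chr_2 l a p : p 2%nat = c -> (l < 3)%nat -> (a < 2)%nat ->
  pd (christoffel 3 G l a a) 2%nat p = dChr 2%nat l a a p.
Proof.
  intros Hp Hl3 Ha. rewrite (pd_ext _ (Chr l a a)).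
  - apply pcv; auto.
  - intro t. apply cv; auto; lia.
Qed.

Lemma tau2_val u : T u 2%nat = mu lam c.
Proof.
  rewrite tv by lia. unfold P6.tauf. expl. field; auto.
Qed.
End S.

End P7.
Import P7.


Module P8.

Ltac destr3 i := destruct i as [|[|[|i]]]; [| | | exfalso; lia].

Definition vec3 (x y z : R) (k : nat) : R :=
  match k with O => x | 1%nat => y | _ => z end.

Definition Gc (A B L s m F1 Bz : R) (i j : nat) : nat -> R :=
  let P := L + s in let Q := s - L in
  match i, j with
  | O, O => vec3 0 0 0
  | O, 1%nat | 1%nat, O => vec3 (-P*A) (-P*B) (-P)
  | 1%nat, 1%nat => vec3 (m*A) (m*B) m
  | O, 2%nat | 2%nat, O => vec3 (B*P*A) (Q + B*P*B) (B*P)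
  | 1%nat, 2%nat | 2%nat, 1%nat => let K := A*P - B*m in vec3 (-Q + K*A) (K*B) K
  | _, _ => let al := -B*P - F1 + B*Q in let be := -A*P + B*m - A*Q - Bz in
            let ga := -2*A*B*P + B*B*m in vec3 (al + ga*A) (be + ga*B) ga
  end.

Definition dGc (A B L s m Aa Ba : R) (i j : nat) : nat -> R :=
  let P := L + s in
  match i, j with
  | O, 1%nat | 1%nat, O => vec3 (-P*Aa) (-P*Ba) 0
  | 1%nat, 1%nat => vec3 (m*Aa) (m*Ba) 0
  | O, 2%nat | 2%nat, O => vec3 (P*(Ba*A + B*Aa)) (2*P*B*Ba) (P*Ba)
  | 1%nat, 2%nat | 2%nat, 1%nat => let K := A*P - B*m in let Ka := Aa*P - Ba*m in
        vec3 (Ka*A + K*Aa) (Ka*B + K*Ba) Ka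
  | _, _ => vec3 0 0 0
  end.

Definition dGc2 (A B m m1 F1 Bz : R) (j : nat) : nat -> R :=
  match j with O => vec3 0 0 0 | _ => vec3 (m1*A + m*F1) (m1*B + m*Bz) m1 end.

Section S.
Variables (lam f h : R -> R) (eps : bool) (c f1 l1 l2 h1 : R).
Notation Chr := (Chr lam f h eps c f1 l1 l2 h1).
Notation dChr := (dChr lam f h eps c f1 l1 l2 h1).

Definition Aq u := Ap f eps (f_c c u).
Definition Bq u := Bp lam h (f_c c u).
Definition Bzq u := Bd lam c l1 l2 h1 2%nat (f_c c u).
Definition Aa (a : nat) := match a with O => 0 | _ => 2 * sgn eps end.
Definition Ba (a : nat) := match a with O => 2 * lam c | _ => - mu lam c end.

Ltac expl3 := unfold Gc, dGc, dGc2, vec3, Aq, Bq, Bzq, Aa, Ba, P5.Chr, P5.dChr, dGi, ddG, P2.Gi, P4.dG, Ad, Bd, Bdd, mu, P2.Ap, P2.Bp, f_c; cbn;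
  generalize (Deriv lam c / (2 * lam c)); intro m; generalize (mu1 lam c l1 l2); intro m1.

Lemma Chr_cf k i j u : (k < 3)%nat -> (i < 3)%nat -> (j < 3)%nat ->
  Chr k i j (f_c c u) = Gc (Aq u) (Bq u) (lam c) (sgn eps) (mu lam c) f1 (Bzq u) i j k.
Proof.
  intros. destr3 k; destr3 i; destr3 j; expl3; field.
Qed.

Lemma dChr_cf a k i j u : (a < 2)%nat -> (k < 3)%nat -> (i < 3)%nat -> (j < 2)%nat ->
  dChr a k i j (f_c c u) = dGc (Aq u) (Bq u) (lam c) (sgn eps) (mu lam c) (Aa a) (Ba a) i j k.
Proof.
  intros. destruct a as [|[|a]]; try lia; destr3 k; destr3 i; destruct j as [|[|j]]; try lia; expl3; field.
Qed.

Lemma dChr2_cf k j u : (k < 3)%nat -> (j < 2)%nat ->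
  dChr 2%nat k j j (f_c c u) = dGc2 (Aq u) (Bq u) (mu lam c) (mu1 lam c l1 l2) f1 (Bzq u) j k.
Proof.
  intros. destr3 k; destruct j as [|[|j]]; try lia; expl3; field.
Qed.
End S.

End P8.
Import P8.


Module P9.

Ltac destr3 i := destruct i as [|[|[|i]]]; [| | | exfalso; lia].

Section S.
Variables (lam f h : R -> R) (eps : bool) (c f1 l1 l2 h1 : R).
Hypothesis Hf : derivable_pt_lim f c f1.
Hypothesis Hl : derivable_pt_lim lam c l1.
Hypothesis Hl2 : derivable_pt_lim (Deriv lam) c l2.
Hypothesis Hh : derivable_pt_lim h c h1.
Hypothesis Hlc : lam c <> 0.

Notation G := (gM lam f h eps).
Notation T := (tension 2 3 (pullback_metric 3 G (f_c c)) G (f_c c)).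
Notation PP := (PP lam eps c).
Let cv := christoffel_val lam f h eps c f1 l1 l2 h1 Hf Hl Hl2 Hh Hlc.
Let pbi := pbinv_val lam f h eps c.
Let tv := tension_val lam f h eps c f1 l1 l2 h1 Hf Hl Hl2 Hh Hlc.
Let dfun := dphi_fun c.
Let cd := curv_delta lam f h eps.
Let p0 := pd_chr_0 lam f h eps c f1 l1 l2 h1 Hf Hl Hl2 Hh Hlc.
Let p1 := pd_chr_1 lam f h eps c f1 l1 l2 h1 Hf Hl Hl2 Hh Hlc.
Let p2 := pd_chr_2 lam f h eps c f1 l1 l2 h1 Hf Hl Hl2 Hh Hlc.
Let ccf := Chr_cf lam f h eps c f1 l1 l2 h1.
Let dcf := dChr_cf lam f h eps c f1 l1 l2 h1.
Let dcf2 := dChr2_cf lam f h eps c f1 l1 l2 h1.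

Lemma Gi2 u k : (k < 3)%nat -> Gi lam f h eps (f_c c u) k 2%nat = vec3 (Aq f eps c u) (Bq lam h c u) 1 k.
Proof. intros. destr3 k; reflexivity. Qed.

Lemma cv_sum u k : (k < 3)%nat ->
  sumn 2 (fun a => sumn 2 (fun b => mat_inv 2 (pullback_metric 3 G (f_c c) u) a b *
        curv 3 G (T u) (dphi (f_c c) a u) (dphi (f_c c) b u) (f_c c u) k))
  = mu lam c * (mu1 lam c l1 l2 - mu lam c ^ 2 - 2 * PP ^ 2) * Gi lam f h eps (f_c c u) k 2%nat.
Proof.
  intros Hk. cbn [sumn]. rewrite !pbi by lia. rewrite !dfun by lia.
  rewrite !cd by lia. unfold CV. cbn [sumn].
  rewrite !tv by lia.
  rewrite !p0 by (try lia; reflexivity).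
  rewrite !p1 by (try lia; reflexivity).
  rewrite !p2 by (try lia; reflexivity).
  rewrite !cv by (try lia; left; reflexivity).
  unfold P6.tauf.
  rewrite !ccf by lia. rewrite !dcf2 by lia. rewrite !dcf by lia. rewrite Gi2 by lia.
  unfold delta; cbn [Nat.eqb].
  unfold Gc, dGc, dGc2, vec3, Aa, Ba, P6.PP.
  generalize (Aq f eps c u) (Bq lam h c u) (Bzq lam c l1 l2 h1 u) (mu lam c) (mu1 lam c l1 l2) (lam c).
  intros A B Bz m m1 L.
  destr3 k; destruct eps; cbn [sgn].

all:field.
Qed.
End S.

Section S2.
Variables (lam f h : R -> R) (eps : bool) (c f1 l1 l2 h1 : R).
Hypothesis Hf : derivable_pt_lim f c f1.
Hypothesis Hl : derivable_pt_lim lam c l1.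
Hypothesis Hl2 : derivable_pt_lim (Deriv lam) c l2.
Hypothesis Hh : derivable_pt_lim h c h1.
Hypothesis Hlc : lam c <> 0.
Notation G := (gM lam f h eps).
Notation T := (tension 2 3 (pullback_metric 3 G (f_c c)) G (f_c c)).

Lemma bt_val u k : (k < 3)%nat ->
  bitension 2 3 (pullback_metric 3 G (f_c c)) G (f_c c) u k
  = mu lam c * (mu1 lam c l1 l2 - 2 * mu lam c ^ 2 - 4 * PP lam eps c ^ 2) * Gi lam f h eps (f_c c u) k 2%nat.
Proof.
  intros Hk. unfold bitension.
  rewrite (rl_val lam f h eps c f1 l1 l2 h1 Hf Hl Hl2 Hh Hlc) by auto.
  rewrite (cv_sum lam f h eps c f1 l1 l2 h1 Hf Hl Hl2 Hh Hlc) by auto. ring.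
Qed.

Lemma tau_val u k : (k < 3)%nat -> T u k = mu lam c * Gi lam f h eps (f_c c u) k 2%nat.
Proof.
  intros Hk. rewrite (tension_val lam f h eps c f1 l1 l2 h1 Hf Hl Hl2 Hh Hlc) by auto.
  unfold P6.tauf. rewrite !(Chr_cf lam f h eps c f1 l1 l2 h1) by lia.
  rewrite (Gi2 lam f h eps c) by auto.
  destr3 k; unfold Gc, vec3; cbn; ring.
Qed.

Lemma Xe_val : (mu1 lam c l1 l2 - 2 * mu lam c ^ 2 - 4 * PP lam eps c ^ 2) * (2 * lam c ^ 2)
  = lam c * l2 - 2 * l1 ^ 2 - 8 * lam c ^ 2 * (1 + sgn eps * lam c) ^ 2.
Proof.
  unfold mu1, mu, PP. rewrite (Dl lam c l1 Hl). destruct eps; cbn [sgn]; field; auto.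
Qed.

Lemma mu_val : mu lam c = l1 / (2 * lam c).
Proof. unfold mu. rewrite (Dl lam c l1 Hl). reflexivity. Qed.

Lemma main_core :
  proper_biharmonic_imm 2 3 G (f_c c) <->
  (l1 <> 0 /\ lam c * l2 - 2 * l1 ^ 2 - 8 * lam c ^ 2 * (1 + sgn eps * lam c) ^ 2 = 0).
Proof.
  assert (Hmu : mu lam c <> 0 <-> l1 <> 0).
  { rewrite mu_val. split.
    - intros H E. apply H. rewrite E. unfold Rdiv. ring.
    - intros H E. apply H.
      apply (f_equal (fun x => x * (2 * lam c))) in E.
      replace (l1 / (2 * lam c) * (2 * lam c)) with l1 in E by (field; auto). lra. }
  pose proof Xe_val as HX.
  assert (Hl2pos : 2 * lam c ^ 2 <> 0) by (apply Rmult_integral_contrapositive; split; [lra| apply pow_nonzero; auto]).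
  split.
  - intros [Hb Hnm].
    assert (Hm : mu lam c <> 0).
    { intro E. apply Hnm. intros u k Hk. rewrite tau_val by auto. rewrite E. ring. }
    split. { apply Hmu; auto. }
    pose proof (Hb (fun _ => 0) 2%nat ltac:(lia)) as E. rewrite bt_val in E by lia.
    rewrite (Gi2 lam f h eps c) in E by lia. change (vec3 _ _ 1 2%nat) with 1 in E. rewrite Rmult_1_r in E.
    apply Rmult_integral in E. destruct E as [E|E]; [contradiction|].
    rewrite <- HX, E. ring.
  - intros [Hd Heq]. split.
    + intros u k Hk. rewrite bt_val by auto.
      assert (E : mu1 lam c l1 l2 - 2 * mu lam c ^ 2 - 4 * PP lam eps c ^ 2 = 0).
      { apply (Rmult_eq_reg_r (2 * lam c ^ 2)); auto. rewrite HX, Heq. ring. }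
      rewrite E. ring.
    + intro Hmin. specialize (Hmin (fun _ => 0) 2%nat ltac:(lia)).
      rewrite tau_val in Hmin by lia. rewrite (Gi2 lam f h eps c) in Hmin by lia. change (vec3 _ _ 1 2%nat) with 1 in Hmin. rewrite Rmult_1_r in Hmin.
      apply Hmu in Hd. contradiction.
Qed.
End S2.

End P9.
Import P9.


Lemma loc_ext (I : R -> Prop) g k x l : is_open_interval I -> I x ->
  (forall y, I y -> k y = g y) -> derivable_pt_lim k x l -> derivable_pt_lim g x l.
Proof.
  intros [_ [_ Ho]] Hx Heq Hd.
  destruct (Ho x Hx) as [e [He Hb]].
  apply is_derive_Reals. apply (is_derive_ext_loc k).
  - exists (mkposreal e He). intros y Hy. apply Heq. apply Hb. exact Hy.
  - apply is_derive_Reals. exact Hd.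
Qed.

Lemma smooth_d (I : R -> Prop) g x : is_open_interval I -> smooth_on I g -> I x ->
  exists D : nat -> R -> R, derivable_pt_lim g x (D 1%nat x) /\ derivable_pt_lim (D 1%nat) x (D 2%nat x) /\
    (forall y, I y -> derivable_pt_lim g y (D 1%nat y)).
Proof.
  intros HI [D [H0 HS]] Hx. exists D.
  assert (Hall : forall y, I y -> derivable_pt_lim g y (D 1%nat y)).
  { intros y Hy. apply (loc_ext I g (D O) y (D 1%nat y) HI Hy); [intros; apply H0; auto | apply HS; auto]. }
  split; [auto|]. split; [apply HS; auto|auto].
Qed.

Theorem proposition6p3 (I : R -> Prop) (lam f h : R -> R) (eps : bool) (c : R) :
  is_open_interval I ->
  smooth_on I lam ->
  (forall z, I z -> 0 < lam z) ->
  (exists z1 z2, I z1 /\ I z2 /\ lam z1 <> lam z2) ->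
  smooth_on I f ->
  smooth_on I h ->
  I c ->
  (proper_biharmonic_imm 2 3 (gM lam f h eps) (f_c c) <->
   (Deriv lam c <> 0 /\
    lam c * Deriv (Deriv lam) c - 2 * (Deriv lam c) ^ 2
      - 8 * (lam c) ^ 2 * (1 + sgn eps * lam c) ^ 2 = 0)).
Proof.
  intros HI Hsl Hpos _ Hsf Hsh Hc.
  destruct (smooth_d I lam c HI Hsl Hc) as [Dl [Hl [Hl2' Hall]]].
  destruct (smooth_d I f c HI Hsf Hc) as [Df [Hf _]].
  destruct (smooth_d I h c HI Hsh Hc) as [Dh [Hh _]].
  assert (Hl2 : derivable_pt_lim (Deriv lam) c (Dl 2%nat c)).
  { apply (loc_ext I (Deriv lam) (Dl 1%nat) c (Dl 2%nat c) HI Hc); [intros y Hy; symmetry; apply Deriv_eq; auto | exact Hl2']. }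
  assert (Hlc : lam c <> 0) by (specialize (Hpos c Hc); lra).
  rewrite (Deriv_eq _ _ _ Hl), (Deriv_eq _ _ _ Hl2).
  exact (main_core lam f h eps c (Df 1%nat c) (Dl 1%nat c) (Dl 2%nat c) (Dh 1%nat c) Hf Hl Hl2 Hh Hlc).
Qed.
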